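(* Let $f:[0,1]\to\mathbb{R}$ be $\alpha$-Hölder for some $\alpha>\frac12$ (i.e. $|f(x)-f(y)|\le C|x-y|^\alpha$ for all $x,y$) and have no finite one-sided derivative at any point, and let $F$ be real-analytic on an open interval containing $f([0,1])$. Then $F\circ f$ has a finite one-sided derivative at a point $x_0$ if and only if $F\circ f$ is differentiable at $x_0$ with derivative $0$. *)

(* Defs.v *)
From Stdlib Require Import Reals Lra.
From Coquelicot Require Import Coquelicot.
Open Scope R_scope.

Definition holder_on01 (f : R -> R) (alpha : R) : Prop :=
  exists C : R, forall x y : R, 0 <= x <= 1 -> 0 <= y <= 1 -> x <> y ->
    Rabs (f x - f y) <= C * Rpower (Rabs (x - y)) alpha.

Definition diff_quot (g : R -> R) (x0 : R) : R -> R :=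
  fun x => (g x - g x0) / (x - x0).

Definition has_right_deriv01 (g : R -> R) (x0 l : R) : Prop :=
  0 <= x0 < 1 /\ filterlim (diff_quot g x0) (at_right x0) (locally l).

Definition has_left_deriv01 (g : R -> R) (x0 l : R) : Prop :=
  0 < x0 <= 1 /\ filterlim (diff_quot g x0) (at_left x0) (locally l).

Definition has_finite_onesided_deriv01 (g : R -> R) (x0 : R) : Prop :=
  exists l : R, has_right_deriv01 g x0 l \/ has_left_deriv01 g x0 l.

(* g : [0,1] -> R is differentiable at x0 with derivative l
   (limit taken within [0,1], i.e. one-sided at the endpoints) *)
Definition has_deriv01 (g : R -> R) (x0 l : R) : Prop :=
  filterlim (diff_quot g x0)
    (within (fun x => 0 <= x <= 1 /\ x <> x0) (locally x0)) (locally l).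

Definition analytic_at (F : R -> R) (c : R) : Prop :=
  exists (r : R) (a : nat -> R), 0 < r /\
    forall x : R, Rabs (x - c) < r -> is_pseries a (x - c) (F x).

Definition analytic_on_interval (F : R -> R) (a b : R) : Prop :=
  forall c : R, a < c < b -> analytic_at F c.

(* Main.v *)
Require Import Defs.
From Stdlib Require Import Reals Lra Lia.
From Coquelicot Require Import Coquelicot.
Open Scope R_scope.

Lemma ballR (x e y : R) : Rabs (y - x) < e -> ball x e y. Proof. intros H; exact H. Qed.
Lemma ballR' (x e y : R) : ball x e y -> Rabs (y - x) < e. Proof. intros H; exact H. Qed.

Fixpoint mxb (u : nat -> R) (N : nat) : R :=
  match N with O => 1 | S k => Rmax (mxb u k) (Rabs (u k)) end.

Lemma mxb_ge1 u N : 1 <= mxb u N.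
Proof. induction N; simpl. lra. eapply Rle_trans; [exact IHN| apply Rmax_l]. Qed.

Lemma mxb_mono u N n : (n < N)%nat -> Rabs (u n) <= mxb u N.
Proof.
  induction N; intros H. lia. simpl.
  destruct (Nat.eq_dec n N) as [->|Hn]. apply Rmax_r.
  eapply Rle_trans; [apply IHN; lia| apply Rmax_l].
Qed.

Lemma lim0_bounded (u : nat -> R) : is_lim_seq u 0 -> exists M, forall n, Rabs (u n) <= M.
Proof.
  intros H. apply is_lim_seq_spec in H.
  destruct (H (mkposreal 1 Rlt_0_1)) as [N HN].
  exists (mxb u N). intros n.
  destruct (Nat.lt_ge_cases n N) as [Hl|Hg].
  - now apply mxb_mono.
  - specialize (HN n Hg). simpl in HN. rewrite Rminus_0_r in HN.
    pose proof (mxb_ge1 u N). lra.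
Qed.

Lemma analytic_local (F : R -> R) (y0 : R) : analytic_at F y0 ->
  exists a1 rho K, 0 < rho /\ 0 < K /\ forall y, Rabs (y - y0) < rho ->
    Rabs (F y - F y0 - a1 * (y - y0)) <= K * (y - y0)^2.
Proof.
  intros [r [a [Hr H]]].
  set (rho0 := r/2).
  assert (Hb : Rbar_le rho0 (CV_radius a)).
  { destruct (CV_radius_bounded a) as [Hub _]. apply Hub.
    assert (Hx : Rabs ((y0 + rho0) - y0) < r).
    { replace (y0 + rho0 - y0) with rho0 by ring. unfold rho0.
      rewrite Rabs_pos_eq; lra. }
    specialize (H _ Hx). replace (y0 + rho0 - y0) with rho0 in H by ring.
    assert (Hl := ex_series_lim_0 _ (ex_intro _ _ H)).
    destruct (lim0_bounded _ Hl) as [M HM]. exists M. intros n.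
    specialize (HM n). rewrite <- pow_n_pow. rewrite Rmult_comm. exact HM. }
  set (b := PS_decr_n a 2).
  assert (Hcv : CV_radius b = CV_radius a).
  { rewrite (CV_radius_ext b (PS_decr_1 (PS_decr_1 a))).
    now rewrite !CV_radius_decr_1. intros n. reflexivity. }
  assert (H0 : Rbar_lt (Rabs 0) (CV_radius b)).
  { rewrite Hcv, Rabs_R0. eapply Rbar_lt_le_trans; [|exact Hb]. simpl. unfold rho0; lra. }
  pose proof (PSeries_continuity b 0 H0) as Hc.
  apply continuity_pt_filterlim in Hc.
  destruct (Hc (ball (PSeries b 0) 1)) as [d Hd].
  { exists (mkposreal 1 Rlt_0_1). intros y Hy. exact Hy. }
  assert (Hdec : forall h, Rabs h < Rmin d rho0 ->
     F (y0 + h) = a 0%nat + a 1%nat * h + h^2 * PSeries b h /\ Rabs (PSeries b h) < Rabs (PSeries b 0) + 1).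
  { intros h Hh.
    assert (Hh1 : Rabs h < d) by (eapply Rlt_le_trans; [exact Hh|apply Rmin_l]).
    assert (Hh2 : Rabs h < rho0) by (eapply Rlt_le_trans; [exact Hh|apply Rmin_r]).
    split.
    - assert (Hi : Rabs (y0 + h - y0) < r).
      { replace (y0 + h - y0) with h by ring. unfold rho0 in Hh2. lra. }
      specialize (H _ Hi). replace (y0 + h - y0) with h in H by ring.
      apply is_pseries_unique in H. rewrite <- H.
      rewrite (PSeries_decr_n a 1 h).
      + simpl. fold b. ring.
      + apply CV_radius_inside. eapply Rbar_lt_le_trans; [|exact Hb]. exact Hh2.
    - assert (Hb' : ball (PSeries b 0) 1 (PSeries b h)).
      { apply Hd. apply ballR. now rewrite Rminus_0_r. }
      apply ballR' in Hb'. pose proof (Rabs_triang_inv (PSeries b h) (PSeries b 0)). lra. }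
  exists (a 1%nat), (Rmin d rho0), (Rabs (PSeries b 0) + 1).
  split; [apply Rmin_glb_lt; [apply cond_pos| unfold rho0; lra]|].
  split; [pose proof (Rabs_pos (PSeries b 0)); lra|].
  intros y Hy.
  destruct (Hdec (y - y0) Hy) as [E1 E2].
  assert (Hz : Rabs 0 < Rmin d rho0) by (rewrite Rabs_R0; apply Rmin_glb_lt; [apply cond_pos| unfold rho0; lra]).
  destruct (Hdec 0 Hz) as [E3 _].
  replace (y0 + (y - y0)) with y in E1 by ring. rewrite Rplus_0_r in E3.
  rewrite E1, E3.
  replace (a 0%nat + a 1%nat * (y - y0) + (y - y0) ^ 2 * PSeries b (y - y0) -
   (a 0%nat + a 1%nat * 0 + 0 ^ 2 * PSeries b 0) - a 1%nat * (y - y0))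
   with ((y - y0) ^ 2 * PSeries b (y - y0)) by ring.
  rewrite Rabs_mult, Rmult_comm. rewrite (Rabs_pos_eq ((y-y0)^2)) by (apply pow2_ge_0).
  apply Rmult_le_compat_r; [apply pow2_ge_0| lra].
Qed.

Definition goodF (Fl : (R -> Prop) -> Prop) (x0 : R) : Prop :=
  Filter Fl /\ (forall eps, 0 < eps -> Fl (fun x => Rabs (x - x0) < eps)) /\
  Fl (fun x => 0 <= x <= 1 /\ x <> x0).

Lemma Rpower_pos' t b : 0 < Rpower t b.
Proof. unfold Rpower. apply exp_pos. Qed.

Lemma holder_pos f al : holder_on01 f al -> exists C, 0 < C /\
  forall x y, 0 <= x <= 1 -> 0 <= y <= 1 -> x <> y ->
    Rabs (f x - f y) <= C * Rpower (Rabs (x - y)) al.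
Proof.
  intros [C HC]. exists (Rmax C 0 + 1). split.
  - pose proof (Rmax_r C 0); lra.
  - intros x y Hx Hy Hxy. eapply Rle_trans; [apply HC; auto|].
    apply Rmult_le_compat_r; [left; apply Rpower_pos'|].
    pose proof (Rmax_l C 0); lra.
Qed.

Lemma small_rpow b e : 0 < b -> 0 < e -> exists d, 0 < d /\ forall t, 0 < t < d -> Rpower t b < e.
Proof.
  intros Hb He. exists (Rpower e (/ b)). split; [apply Rpower_pos'|].
  intros t Ht. replace e with (Rpower (Rpower e (/b)) b) at 1.
  - apply Rlt_Rpower_l; lra.
  - rewrite Rpower_mult, Rinv_l by lra. apply Rpower_1; lra.
Qed.

Lemma f_cont Fl f al x0 : goodF Fl x0 -> 0 < al -> holder_on01 f al -> 0 <= x0 <= 1 ->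
  forall eps, 0 < eps -> Fl (fun x => Rabs (f x - f x0) < eps).
Proof.
  intros [HF [Hs HP]] Hal Hh Hx0 eps He.
  destruct (holder_pos _ _ Hh) as [C [HC HCb]].
  destruct (small_rpow al (eps / C) Hal) as [d [Hd Hdd]].
  { apply Rdiv_lt_0_compat; lra. }
  apply filter_imp with (fun x => Rabs (x - x0) < d /\ (0 <= x <= 1 /\ x <> x0)).
  2: apply filter_and; auto.
  intros x [H1 [H2 H3]].
  eapply Rle_lt_trans; [apply HCb; auto|].
  assert (Hp : 0 < Rabs (x - x0)) by (apply Rabs_pos_lt; lra).
  specialize (Hdd _ (conj Hp H1)).
  apply Rmult_lt_compat_l with (r := C) in Hdd; [|lra].
  replace (C * (eps / C)) with eps in Hdd by (field; lra). exact Hdd.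
Qed.

Lemma lemA Fl f F al x0 rho K : goodF Fl x0 -> 1/2 < al -> holder_on01 f al -> 0 <= x0 <= 1 ->
  0 < rho -> 0 < K ->
  (forall y, Rabs (y - f x0) < rho -> Rabs (F y - F (f x0)) <= K * (y - f x0)^2) ->
  filterlim (diff_quot (fun x => F (f x)) x0) Fl (locally 0).
Proof.
  intros HG Hal Hh Hx0 Hrho HK Hloc.
  pose proof HG as [HF [Hs HP]].
  destruct (holder_pos _ _ Hh) as [C [HC HCb]].
  intros P [eps HPe].
  destruct (small_rpow (2*al - 1) (eps / (K * C^2))) as [d [Hd Hdd]].
  lra. { apply Rdiv_lt_0_compat. apply cond_pos. apply Rmult_lt_0_compat; [lra| apply pow_lt; lra]. }
  unfold filtermap.
  apply (filter_imp (fun x => Rabs (f x - f x0) < rho /\ (Rabs (x - x0) < d /\ (0 <= x <= 1 /\ x <> x0)))).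
  2: { apply filter_and; [apply (f_cont Fl f al x0); auto; lra| apply filter_and; auto]. }
  intros x [H0 [H1 [H2 H3]]]. apply HPe. apply ballR.
  rewrite Rminus_0_r. unfold diff_quot.
  set (t := Rabs (x - x0)).
  assert (Ht : 0 < t) by (apply Rabs_pos_lt; lra).
  set (u := Rpower t al).
  assert (Hu : Rpower t (2*al - 1) * t = u * u).
  { unfold u. rewrite <- (Rpower_1 t) at 2 by lra. rewrite <- !Rpower_plus. f_equal. ring. }
  specialize (Hdd t (conj Ht H1)).
  assert (Hfx : Rabs (f x - f x0) <= C * u) by (apply HCb; auto).
  assert (HFx := Hloc _ H0).
  assert (Hsq : (f x - f x0)^2 <= (C*u)^2).
  { rewrite <- pow2_abs. apply pow_incr. split; [apply Rabs_pos| exact Hfx]. }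
  rewrite Rabs_div by lra. fold t.
  apply Rlt_div_l; [exact Ht|].
  apply Rmult_lt_compat_l with (r := K * C^2) in Hdd; [|apply Rmult_lt_0_compat; [lra| apply pow_lt; lra]].
  assert (HKC : K * C ^ 2 <> 0) by (apply Rgt_not_eq, Rmult_lt_0_compat; [lra| apply pow_lt; lra]).
  replace (K * C ^ 2 * (eps / (K * C ^ 2))) with (pos eps) in Hdd by (field; split; lra).
  assert (K * (f x - f x0)^2 <= K * (C*u)^2) by (apply Rmult_le_compat_l; lra).
  assert (K * (C*u)^2 = K * C^2 * (Rpower t (2*al - 1) * t)) by (rewrite Hu; ring).
  assert (K * C ^ 2 * Rpower t (2 * al - 1) * t < eps * t) by (apply Rmult_lt_compat_r; lra).
  lra.
Qed.

Lemma lemB Fl f F al x0 rho K a1 l : goodF Fl x0 -> 0 < al -> holder_on01 f al -> 0 <= x0 <= 1 ->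
  0 < rho -> 0 < K -> a1 <> 0 ->
  (forall y, Rabs (y - f x0) < rho -> Rabs (F y - F (f x0) - a1 * (y - f x0)) <= K * (y - f x0)^2) ->
  filterlim (diff_quot (fun x => F (f x)) x0) Fl (locally l) ->
  filterlim (diff_quot f x0) Fl (locally (l / a1)).
Proof.
  intros HG Hal Hh Hx0 Hrho HK Ha1 Hloc Hl.
  pose proof HG as [HF [Hs HP]].
  set (q := fun x => match Req_EM_T (f x) (f x0) with left _ => a1
          | right _ => (F (f x) - F (f x0)) / (f x - f x0) end).
  assert (Hq : forall eps, 0 < eps -> Fl (fun x => Rabs (q x - a1) < eps)).
  { intros eps He.
    apply (filter_imp (fun x => Rabs (f x - f x0) < Rmin rho (eps / K))).
    2: { apply (f_cont Fl f al x0); auto. apply Rmin_glb_lt; [lra| apply Rdiv_lt_0_compat; lra]. }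
    intros x Hx. unfold q. destruct (Req_EM_T (f x) (f x0)) as [E|E].
    - rewrite Rminus_eq_0, Rabs_R0. lra.
    - assert (Hh0 : f x - f x0 <> 0) by lra.
      assert (Hx1 : Rabs (f x - f x0) < rho) by (eapply Rlt_le_trans; [exact Hx| apply Rmin_l]).
      assert (Hx2 : Rabs (f x - f x0) < eps / K) by (eapply Rlt_le_trans; [exact Hx| apply Rmin_r]).
      specialize (Hloc _ Hx1).
      replace ((F (f x) - F (f x0)) / (f x - f x0) - a1) with
        ((F (f x) - F (f x0) - a1 * (f x - f x0)) / (f x - f x0)) by (field; exact Hh0).
      rewrite Rabs_div by exact Hh0.
      assert (Hp : 0 < Rabs (f x - f x0)) by (apply Rabs_pos_lt; exact Hh0).
      apply Rmult_lt_reg_r with (Rabs (f x - f x0)); [exact Hp|].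
      unfold Rdiv. rewrite Rmult_assoc, Rinv_l, Rmult_1_r by lra.
      rewrite <- pow2_abs in Hloc.
      apply Rmult_lt_compat_r with (r := K) in Hx2; [|lra].
      replace (eps / K * K) with eps in Hx2 by (field; lra).
      nra. }
  assert (Hqf : filterlim q Fl (locally a1)).
  { intros P [eps HPe]. unfold filtermap.
    apply (filter_imp (fun x => Rabs (q x - a1) < eps)); [|apply Hq, cond_pos].
    intros x Hx. apply HPe, ballR. exact Hx. }
  assert (Hinv : filterlim (fun x => / q x) Fl (locally (/ a1))).
  { eapply filterlim_comp; [exact Hqf|].
    exact (filterlim_Rbar_inv (Finite a1) ltac:(intro E; apply Ha1; injection E; auto)). }
  assert (Hprod : filterlim (fun x => diff_quot (fun x => F (f x)) x0 x * / q x) Fl (locally (l * / a1))).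
  { eapply filterlim_comp_2; [exact Hl | exact Hinv |].
    apply (filterlim_Rbar_mult (Finite l) (Finite (/ a1)) (Finite (l * / a1))).
    reflexivity. }
  eapply filterlim_ext_loc; [|exact Hprod].
  apply (filter_imp (fun x => Rabs (q x - a1) < Rabs a1 /\ (0 <= x <= 1 /\ x <> x0))).
  2: { apply filter_and; auto. apply Hq. apply Rabs_pos_lt; exact Ha1. }
  intros x [Hx1 [Hx2 Hx3]].
  assert (Hqx : q x <> 0).
  { intros E. rewrite E, Rminus_0_l, Rabs_Ropp in Hx1. lra. }
  assert (Hxx : x - x0 <> 0) by lra.
  revert Hqx. unfold q, diff_quot. destruct (Req_EM_T (f x) (f x0)) as [E|E]; intros Hqx.
  - rewrite E, !Rminus_eq_0. unfold Rdiv. ring.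
  - assert (Hh0 : f x - f x0 <> 0) by lra.
    field. repeat split; auto.
    intros E2. apply Hqx. rewrite E2. unfold Rdiv. ring.
Qed.

Lemma loc_ball x0 e : 0 < e -> locally x0 (fun x => Rabs (x - x0) < e).
Proof. intros He. exists (mkposreal e He). intros y Hy. exact (ballR' _ _ _ Hy). Qed.

Lemma goodF_within x0 : goodF (within (fun x => 0 <= x <= 1 /\ x <> x0) (locally x0)) x0.
Proof.
  split; [apply within_filter, locally_filter|]. split.
  - intros eps He. unfold within. apply (filter_imp (fun x => Rabs (x - x0) < eps)); [auto| apply loc_ball; exact He].
  - unfold within. apply filter_forall. auto.
Qed.

Lemma goodF_right x0 : 0 <= x0 < 1 -> goodF (at_right x0) x0.
Proof.
  intros Hx. split; [apply at_right_proper_filter|]. split.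
  - intros eps He. unfold at_right, within. apply (filter_imp (fun x => Rabs (x - x0) < eps)); [auto| apply loc_ball; exact He].
  - unfold at_right, within. apply (filter_imp (fun x => Rabs (x - x0) < 1 - x0)); [|apply loc_ball; lra].
    intros x H1 H2. destruct (Rabs_def2 _ _ H1). lra.
Qed.

Lemma goodF_left x0 : 0 < x0 <= 1 -> goodF (at_left x0) x0.
Proof.
  intros Hx. split; [apply at_left_proper_filter|]. split.
  - intros eps He. unfold at_left, within. apply (filter_imp (fun x => Rabs (x - x0) < eps)); [auto| apply loc_ball; exact He].
  - unfold at_left, within. apply (filter_imp (fun x => Rabs (x - x0) < x0)); [|apply loc_ball; lra].
    intros x H1 H2. destruct (Rabs_def2 _ _ H1). lra.
Qed.

Theorem mainTheorem9 (f F : R -> R) (alpha : R) (a b : R) :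
  1/2 < alpha ->
  holder_on01 f alpha ->
  (forall x0 : R, 0 <= x0 <= 1 -> ~ has_finite_onesided_deriv01 f x0) ->
  (forall x : R, 0 <= x <= 1 -> a < f x < b) ->
  analytic_on_interval F a b ->
  forall x0 : R, 0 <= x0 <= 1 ->
    (has_finite_onesided_deriv01 (fun x => F (f x)) x0 <->
     has_deriv01 (fun x => F (f x)) x0 0).
Proof.
  intros Hal Hh Hnd Hab HF x0 Hx0.
  destruct (analytic_local F (f x0) (HF _ (Hab _ Hx0))) as [a1 [rho [K [Hr [HK Hloc]]]]].
  split.
  - intros [l Hl]. destruct (Req_dec a1 0) as [E|E].
    + apply (lemA _ f F alpha x0 rho K); auto. apply goodF_within.
      intros y Hy. specialize (Hloc y Hy). rewrite E, Rmult_0_l, Rminus_0_r in Hloc. exact Hloc.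
    + exfalso. apply (Hnd x0 Hx0). exists (l / a1).
      destruct Hl as [[Hx Hl]|[Hx Hl]]; [left|right]; split; auto.
      * eapply (lemB _ f F alpha x0 rho K a1 l); auto; [apply goodF_right; auto| lra].
      * eapply (lemB _ f F alpha x0 rho K a1 l); auto; [apply goodF_left; auto| lra].
  - intros H. exists 0. destruct (Rlt_dec x0 1) as [Hlt|Hge].
    + left. split; [lra|]. eapply filterlim_filter_le_1; [|exact H].
      intros P HP. unfold at_right, within. unfold within in HP.
      apply (filter_imp (fun x => ((0 <= x <= 1 /\ x <> x0) -> P x) /\ Rabs (x - x0) < 1 - x0)).
      2: { apply filter_and; [exact HP| apply loc_ball; lra]. }
      intros x [H1 H2] H3. destruct (Rabs_def2 _ _ H2). apply H1. split; lra.
    + right. split; [lra|]. eapply filterlim_filter_le_1; [|exact H].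
      intros P HP. unfold at_left, within. unfold within in HP.
      apply (filter_imp (fun x => ((0 <= x <= 1 /\ x <> x0) -> P x) /\ Rabs (x - x0) < 1)).
      2: { apply filter_and; [exact HP| apply loc_ball; lra]. }
      intros x [H1 H2] H3. destruct (Rabs_def2 _ _ H2). apply H1. split; lra.
Qed.
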